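(* Let $G$ be a graph of order $n\ge 2$. Then $\gamma^{SLD}(G)=n$ if and only if every maximal vertex of the vicinal preorder of $G$ has a twin.
   Context: All graphs are finite, simple and undirected (not necessarily connected). For $u\in V$, $N(u)$ is the set of neighbours of $u$ and $N[u]=N(u)\cup\{u\}$. A code is a non-empty subset $C\subseteq V$; $I(C;u)=N[u]\cap C$. A code $C$ is self-locating-dominating if for every $u\in V\setminus C$ we have $I(C;u)\neq\emptyset$ and $\bigcap_{c\in I(C;u)}N[c]=\{u\}$; $\gamma^{SLD}(G)$ is the minimum size of such a code. The vicinal preorder $\lesssim$ on $V(G)$ is defined by $x\lesssim y$ iff $N(x)\subseteq N[y]$. Write $x<y$ if $x\lesssim y$ and not $y\lesssim x$. A vertex $x$ is maximal if there is no vertex $y$ with $x<y$. Distinct vertices $u,v$ are twins if $N(u)=N(v)$ (false twins) or $N[u]=N[v]$ (true twins). *)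

(* Defs.v *)
From mathcomp Require Import all_boot.
Set Implicit Arguments. Unset Strict Implicit. Unset Printing Implicit Defensive.

Definition simple_graph (T : finType) (e : rel T) : Prop :=
  symmetric e /\ irreflexive e.

Section SLD.
Variables (T : finType) (e : rel T).

Definition onbhd (u : T) : {set T} := [set v | e u v].
Definition cnbhd (u : T) : {set T} := u |: onbhd u.

Definition Icode (C : {set T}) (u : T) : {set T} := cnbhd u :&: C.

Definition is_SLD (C : {set T}) : bool :=
  (C != set0) &&
  [forall u, (u \notin C) ==>
     ((Icode C u != set0) &&
      ((\bigcap_(c in Icode C u) cnbhd c) == [set u]))].

(* gamma^SLD(G): minimum size of an SLD code (V itself is always one). *)
Definition gammaSLD : nat :=
  \big[minn/#|T|]_(C : {set T} | is_SLD C) #|C|.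

Definition vic_le (x y : T) : bool := onbhd x \subset cnbhd y.
Definition vic_lt (x y : T) : bool := vic_le x y && ~~ vic_le y x.
Definition vic_maximal (x : T) : bool := [forall y, ~~ vic_lt x y].

Definition twins (u v : T) : bool :=
  (u != v) && ((onbhd u == onbhd v) || (cnbhd u == cnbhd v)).
Definition has_twin (u : T) : bool := [exists v, twins u v].

End SLD.

(* Main.v *)
Require Import Defs.
From mathcomp Require Import all_boot.
From Stdlib Require Import Setoid.

Lemma inC (T : finType) (e : rel T) u a : (a \in cnbhd e u) = (a == u) || e u a.
Proof. by rewrite /cnbhd /onbhd !inE. Qed.

Lemma inO (T : finType) (e : rel T) u a : (a \in onbhd e u) = e u a.
Proof. by rewrite /onbhd !inE. Qed.

Lemma vic_le_trans (T : finType) (e : rel T) x y z :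
  simple_graph e -> vic_le e x y -> vic_le e y z -> vic_le e x z.
Proof.
case=> sym irr /subsetP hxy /subsetP hyz; apply/subsetP => a xa.
have := hxy a xa; rewrite inC => /orP [/eqP ay|ya].
- subst a.
  have : x \in cnbhd e z by apply: hyz; rewrite inO sym -inO.
  rewrite inC => /orP [/eqP xz|zx].
  + by subst z; rewrite inC; move: xa; rewrite inO => ->; rewrite orbT.
  + have : z \in cnbhd e y by apply: hxy; rewrite inO sym.
    rewrite !inC => /orP [/eqP ->|yz]; first by rewrite eqxx.
    by rewrite sym yz orbT.
- by apply: hyz; rewrite inO.
Qed.

Lemma vic_lt_card (T : finType) (e : rel T) y z :
  simple_graph e -> vic_lt e y z -> #|onbhd e y| < #|onbhd e z|.
Proof.
case=> sym irr /andP [hyz hzy].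
have cO u : onbhd e u \subset cnbhd e u by apply: subsetUr.
have cC u : #|cnbhd e u| = #|onbhd e u|.+1.
  by rewrite /cnbhd cardsU1 inO irr.
case eyz: (e y z).
- have : cnbhd e y \proper cnbhd e z.
    rewrite properEneq; apply/andP; split.
      apply/negP => /eqP E; apply/negP: hzy; by rewrite /vic_le E cO.
    apply/subsetP => a; rewrite inC => /orP [/eqP ->|ya].
      by rewrite inC sym eyz orbT.
    by apply: (subsetP hyz); rewrite inO.
  by move/proper_card; rewrite !cC.
- apply: proper_card; rewrite properEneq; apply/andP; split.
    apply/negP => /eqP E; apply/negP: hzy; by rewrite /vic_le -E cO.
  apply/subsetP => a ya.
  have := subsetP hyz a ya; rewrite inC inO => /orP [/eqP az|//].
  by subst a; rewrite inO eyz in ya.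
Qed.

Lemma exists_max (T : finType) (e : rel T) x :
  simple_graph e -> exists y, vic_le e x y && vic_maximal e y.
Proof.
move=> sg.
have Px : vic_le e x x by apply: subsetUr.
case: (@arg_maxnP T x (vic_le e x) (fun y => #|onbhd e y|) Px) => y xy maxy.
exists y; rewrite xy /=; apply/forallP => z; apply/negP => yz.
have := maxy z (@vic_le_trans T e x y z sg xy (proj1 (andP yz))).
by rewrite /= leqNgt (@vic_lt_card T e y z sg yz).
Qed.

Lemma sld_compl (T : finType) (e : rel T) x :
  simple_graph e -> 2 <= #|T| ->
  is_SLD e (~: [set x]) <-> (forall v, v != x -> ~~ vic_le e x v).
Proof.
case=> sym irr n2.
have ex2 : exists v, v != x.
  apply/existsP; rewrite -(@negbK [exists v, v != x]); apply/negP => /existsPn H.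
  have : #|T| <= 1.
    rewrite -(cardsT T); have -> : [set: T] = [set x].
      by apply/setP => v; rewrite !inE; move: (H v); rewrite negbK.
    by rewrite cards1.
  by rewrite leqNgt n2.
have IC : Icode e (~: [set x]) x = onbhd e x.
  apply/setP => a; rewrite /Icode !inE.
  by case: eqP => [->|]; rewrite ?irr //= andbT.
split.
- case/andP => _ /forallP /(_ x); rewrite !inE eqxx /= IC => /andP [_ /eqP B].
  move=> v vx; apply/negP => /subsetP H.
  have : v \in \bigcap_(c in onbhd e x) cnbhd e c.
    apply/bigcapP => c xc; have := H c xc; rewrite !inC => /orP [/eqP ->|vc].
      by rewrite eqxx.
    by rewrite sym vc orbT.
  by rewrite B inE (negbTE vx).
- move=> H; apply/andP; split.
    case: ex2 => v vx; apply/set0Pn; exists v; by rewrite !inE.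
  apply/forallP => u; apply/implyP; rewrite !inE negbK => /eqP ->.
  rewrite IC; apply/andP; split.
    case: ex2 => v vx; apply/set0Pn; have := H v vx.
    rewrite /vic_le; case: (set_0Vmem (onbhd e x)) => [->|[c c0]].
      by rewrite sub0set.
    by move=> _; exists c.
  apply/eqP/setP => w; rewrite inE; case: (eqVneq w x) => [->|wx].
    by apply/bigcapP => c; rewrite inO => xc; rewrite inC sym xc orbT.
  apply/negP => /bigcapP Hw; have := H w wx; apply/negP/negPn.
  apply/subsetP => c xc; have := Hw c xc; rewrite !inC => /orP [/eqP ->|cw].
    by rewrite eqxx.
  by rewrite sym cw orbT.
Qed.

Lemma sld_mono (T : finType) (e : rel T) (C D : {set T}) :
  simple_graph e -> is_SLD e C -> C \subset D -> is_SLD e D.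
Proof.
case=> sym irr /andP [C0 /forallP H] CD; apply/andP; split.
  apply/negP => /eqP D0; move: CD; rewrite D0 subset0 => /eqP C0'.
  by rewrite C0' eqxx in C0.
apply/forallP => u; apply/implyP => uD.
have uC : u \notin C by apply/negP => /(subsetP CD); apply/negP.
have /andP [I0 /eqP B] := implyP (H u) uC.
have sI : Icode e C u \subset Icode e D u by apply: setIS.
apply/andP; split.
  apply/negP => /eqP E; move: sI; rewrite E subset0 => /eqP E'.
  by rewrite E' eqxx in I0.
apply/eqP/setP => w; rewrite inE; apply/idP/idP.
- move=> Hw; rewrite -in_set1 -B; apply/bigcapP => c cI.
  by move/bigcapP: Hw; apply; apply: (subsetP sI).
- move/eqP ->; apply/bigcapP => c; rewrite /Icode inE => /andP [cu _].
  move: cu; rewrite !inC => /orP [/eqP ->|uc]; first by rewrite eqxx.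
  by rewrite sym uc orbT.
Qed.

Lemma bigmin_le (I : finType) (P : pred I) (F : I -> nat) d i :
  P i -> \big[minn/d]_(j | P j) F j <= F i.
Proof.
move=> Pi; have : i \in index_enum I by rewrite mem_index_enum.
elim: (index_enum I) => [|j r IH] //; rewrite inE big_cons => /orP [/eqP <-|ir].
  by rewrite Pi geq_min leqnn.
by case: (P j); rewrite ?geq_min (IH ir) ?orbT.
Qed.

Lemma gamma_iff (T : finType) (e : rel T) :
  gammaSLD e = #|T| <-> (forall C, is_SLD e C -> #|T| <= #|C|).
Proof.
split.
- move=> G C HC; rewrite -G /gammaSLD; exact: (@bigmin_le _ (is_SLD e) (fun C => #|C|) #|T| C HC).
- move=> H; rewrite /gammaSLD; apply/eqP; rewrite eqn_leq; apply/andP; split.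
    apply: (big_ind (fun m => m <= #|T|)) => //.
      by move=> a b ha hb; rewrite geq_min ha.
    by move=> C _; apply: max_card.
  apply: (big_ind (fun m => #|T| <= m)) => //.
  by move=> a b ha hb; rewrite leq_min ha hb.
Qed.

Lemma step1 (T : finType) (e : rel T) :
  simple_graph e -> 2 <= #|T| ->
  gammaSLD e = #|T| <-> (forall x, ~ is_SLD e (~: [set x])).
Proof.
move=> sg n2; rewrite gamma_iff; split.
- move=> H x /H; rewrite cardsC1; case: #|T| n2 => [|[|n]] //= _.
  by rewrite ltnn.
- move=> H C HC; case: (boolP ([set: T] \subset C)) => [sub|].
    by rewrite -cardsT subset_leq_card.
  case/subsetPn => x _ xC; exfalso; apply: (H x).
  apply: (@sld_mono T e C _ sg HC); apply/subsetP => y yC; rewrite !inE.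
  by apply/negP => /eqP yx; subst y; rewrite yC in xC.
Qed.

Theorem mainTheorem5 (T : finType) (e : rel T) :
  simple_graph e -> 2 <= #|T| ->
  (gammaSLD e = #|T| <->
   (forall x : T, vic_maximal e x -> has_twin e x)).
Proof.
move=> sg n2; have [sym irr] := sg; rewrite step1 //.
have E : (forall x, ~ is_SLD e (~: [set x])) <->
         (forall x, exists v, (v != x) && vic_le e x v).
  split.
  - move=> H x; case: (boolP [exists v, (v != x) && vic_le e x v]) => [/existsP //|/existsPn N].
    exfalso; apply: (H x); apply/(@sld_compl T e x sg n2) => v vx.
    by move: (N v); rewrite vx.
  - move=> H x /(@sld_compl T e x sg n2) H'; case: (H x) => v /andP [vx xv].
    by move: (H' v vx); rewrite xv.
rewrite E; split.
- move=> H x mx; case: (H x) => v /andP [vx xv].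
  have vxle : vic_le e v x.
    move/forallP: mx => /(_ v); rewrite /vic_lt xv /= negbK //.
  apply/existsP; exists v; rewrite /twins eq_sym vx /=.
  case evx : (e x v).
  - apply/orP; right; apply/eqP/setP => a; rewrite !inC.
    case: (eqVneq a x) => [->|ax] /=; first by rewrite sym evx orbT.
    case: (eqVneq a v) => [->|av] /=; first by rewrite evx.
    apply/idP/idP => h.
      by have := subsetP xv a; rewrite inO inC (negbTE av) /=; apply.
    by have := subsetP vxle a; rewrite inO inC (negbTE ax) /=; apply.
  - apply/orP; left; apply/eqP/setP => a; rewrite !inO.
    apply/idP/idP => h.
      have := subsetP xv a; rewrite inO inC => /(_ h) /orP [/eqP av|//].
      by subst a; rewrite evx in h.
    have := subsetP vxle a; rewrite inO inC => /(_ h) /orP [/eqP ax|//].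
    by subst a; rewrite sym evx in h.
- move=> H x; have [y /andP [xy my]] := @exists_max T e x sg.
  case: (eqVneq y x) => [yx|yx]; last by exists y; rewrite yx xy.
  subst y; case/existsP: (H x my) => w /andP [xw tw].
  exists w; rewrite eq_sym xw /=; case/orP: tw => /eqP tw.
    by rewrite /vic_le tw subsetUr.
  by rewrite /vic_le -tw subsetUr.
Qed.
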